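(* Let $\mathcal T=(\mathbf T^{(1)},\dots,\mathbf T^{(n)})$ be an MPS with contraction $\mathbf T\neq0$, and let $\delta$ be an $\epsilon$-perturbation of $\mathcal T$. Then as $\epsilon\to0$, $$\mathscr E_r(\mathcal T,\delta)\le\epsilon\sum_{j=1}^n\frac{\|T^{[1,j-1]}_\rightarrow\|_2\,\|\mathbf T^{(j)}\|_F\,\|T^{[j+1,n]}_\leftarrow\|_2}{\|\mathbf T\|_F}+O(\epsilon^2).$$ Moreover the bound is tight: it is attained up to $O(\epsilon^2)$ by some $\epsilon$-perturbation when $\mathcal T$ is a product state network.
   Context: MPS: an MPS with $n$ sites is a tensor network on a path: site $j$ carries a physical (uncontracted) leg $p_j$, and for $1\le j\le n-1$ a bond (contracted leg) $b_j$ of dimension $D_j$ joins sites $j$ and $j+1$; $\mathbf T^{(1)}$ has legs $(p_1,b_1)$, $\mathbf T^{(n)}$ has legs $(b_{n-1},p_n)$, and $\mathbf T^{(j)}$ for $1<j<n$ has legs $(b_{j-1},p_j,b_j)$. The contraction $\mathbf T$ sums over all bond indices the product of the site entries. For $a\le b$, $\mathbf T^{[a,b]}$ is the contraction of sites $a,\dots,b$ only. $T^{[1,j-1]}_\rightarrow$ is the matricization of $\mathbf T^{[1,j-1]}$ with rows indexed by $p_1,\dots,p_{j-1}$ and columns by $b_{j-1}$; $T^{[j+1,n]}_\leftarrow$ is the matricization of $\mathbf T^{[j+1,n]}$ with rows indexed by $p_{j+1},\dots,p_n$ and columns by $b_j$; by convention $\|T^{[1,0]}_\rightarrow\|_2=\|T^{[n+1,n]}_\leftarrow\|_2=1$.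 An $\epsilon$-perturbation is a tuple $\delta=(\delta^{(i)})_{i=1}^n$, $\delta^{(i)}$ of the shape of $\mathbf T^{(i)}$, with $\|\delta^{(i)}\|_F\le\epsilon\|\mathbf T^{(i)}\|_F$ for all $i$; $\hat{\mathbf T}$ is the contraction of the sites $\mathbf T^{(i)}+\delta^{(i)}$ and $\mathscr E_r(\mathcal T,\delta)=\|\hat{\mathbf T}-\mathbf T\|_F/\|\mathbf T\|_F$. Product state network: there are unit vectors $u_e$, one per leg $e$, with each $\mathbf T^{(j)}=\|\mathbf T^{(j)}\|_F\bigotimes_{e\text{ at }j}u_e$. $\|\cdot\|_F$ Frobenius, $\|\cdot\|_2$ spectral norm. *)

(* Defs.v *)
From Stdlib Require Import Bool Reals Lra Lia Arith List ClassicalEpsilon.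
Open Scope R_scope.

(** Site tensors of an n-site MPS are given as a single function
    [A : nat -> nat -> nat -> nat -> R]: for 1 <= j <= n,
    [A j a p b] is the entry of T^(j) at (b_{j-1} = a, p_j = p, b_j = b).
    Physical dimensions: [d j] for site j; bond dimensions [D j] for bond
    b_j, 1 <= j <= n-1.  The boundary legs b_0, b_n do not exist in the
    paper; we encode them uniformly as dummy legs of dimension 1 (index 0),
    so that T^(1) with legs (p_1,b_1) is [fun p b => A 1 0 p b], etc.
    Entries outside the index ranges are never used. *)

Definition site_tensors := nat -> nat -> nat -> nat -> R.

Definition bdim (n : nat) (D : nat -> nat) (j : nat) : nat :=
  if orb (j =? 0)%nat (n <=? j)%nat then 1%nat else D j.

Fixpoint rsum (m : nat) (f : nat -> R) : R :=
  match m with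
  | O => 0
  | S m' => rsum m' f + f m'
  end.

Fixpoint msum (ds : list nat) (f : list nat -> R) : R :=
  match ds with
  | nil => f nil
  | m :: ds' => rsum m (fun i => msum ds' (fun l => f (i :: l)))
  end.

Definition pdims (d : nat -> nat) (i k : nat) : list nat := map d (seq i k).

(** left partial contraction T^[1,j]: physical indices ps (positions
    0..j-1 hold p_1..p_j), bond index b of b_j *)
Fixpoint lenv (n : nat) (D : nat -> nat) (A : site_tensors)
    (j : nat) (ps : list nat) (b : nat) : R :=
  match j with
  | O => if (b =? 0)%nat then 1 else 0
  | S j' => rsum (bdim n D j')
              (fun a => lenv n D A j' ps a * A (S j') a (nth j' ps 0%nat) b)
  end.

(** right partial contraction T^[n-k+1,n]: physical indices ps
    (= p_{n-k+1},...,p_n), bond index b of b_{n-k} *)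
Fixpoint renv (n : nat) (D : nat -> nat) (A : site_tensors)
    (k : nat) (ps : list nat) (b : nat) : R :=
  match k with
  | O => if (b =? 0)%nat then 1 else 0
  | S k' => rsum (bdim n D (n - k'))
              (fun c => A (n - k')%nat b (hd 0%nat ps) c * renv n D A k' (tl ps) c)
  end.

Definition contr (n : nat) (D : nat -> nat) (A : site_tensors) (ps : list nat) : R :=
  lenv n D A n ps 0.

Definition fro_full (n : nat) (d D : nat -> nat) (A : site_tensors) : R :=
  sqrt (msum (pdims d 1 n) (fun ps => (contr n D A ps) ^ 2)).

Definition fro_site (n : nat) (d D : nat -> nat) (A : site_tensors) (j : nat) : R :=
  sqrt (rsum (bdim n D (j - 1)) (fun a =>
        rsum (d j) (fun p =>
        rsum (bdim n D j) (fun b => (A j a p b) ^ 2)))).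

(** spectral norm of a matrix M with rows indexed by multi-indices over ds
    and columns by 0..m-1:  sup_{||x||=1} ||M x||  (0 if m = 0) *)
Definition spec_norm (ds : list nat) (m : nat) (M : list nat -> nat -> R) : R :=
  epsilon (inhabits 0)
    (is_lub (fun y => y = 0 \/
       exists x : nat -> R, rsum m (fun c => (x c) ^ 2) = 1 /\
         y = sqrt (msum ds (fun r => (rsum m (fun c => M r c * x c)) ^ 2)))).

(** || T^[1,j-1]_-> ||_2  (rows p_1..p_{j-1}, columns b_{j-1}) *)
Definition lnorm (n : nat) (d D : nat -> nat) (A : site_tensors) (j : nat) : R :=
  spec_norm (pdims d 1 (j - 1)) (bdim n D (j - 1)) (lenv n D A (j - 1)).

(** || T^[j+1,n]_<- ||_2  (rows p_{j+1}..p_n, columns b_j) *)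
Definition rnorm (n : nat) (d D : nat -> nat) (A : site_tensors) (j : nat) : R :=
  spec_norm (pdims d (j + 1) (n - j)) (bdim n D j) (renv n D A (n - j)).

Definition first_order_coeff (n : nat) (d D : nat -> nat) (A : site_tensors) : R :=
  rsum n (fun i => let j := S i in
    lnorm n d D A j * fro_site n d D A j * rnorm n d D A j / fro_full n d D A).

Definition tadd (A B : site_tensors) : site_tensors :=
  fun j a p b => A j a p b + B j a p b.

Definition is_eps_perturbation (n : nat) (d D : nat -> nat)
    (A delta : site_tensors) (eps : R) : Prop :=
  forall j, (1 <= j <= n)%nat -> fro_site n d D delta j <= eps * fro_site n d D A j.

Definition rel_err (n : nat) (d D : nat -> nat) (A delta : site_tensors) : R :=
  sqrt (msum (pdims d 1 n) (fun ps =>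
          (contr n D (tadd A delta) ps - contr n D A ps) ^ 2))
  / fro_full n d D A.

(** product state network: unit vectors u j on leg p_j (1<=j<=n) and w j on
    bond b_j (1<=j<=n-1) with T^(j) = ||T^(j)||_F (w_{j-1} (x) u_j (x) w_j),
    the dummy boundary legs carrying the constant 1. *)
Definition bvec (n : nat) (w : nat -> nat -> R) (j : nat) : nat -> R :=
  if orb (j =? 0)%nat (n <=? j)%nat then (fun _ => 1) else w j.

Definition product_state (n : nat) (d D : nat -> nat) (A : site_tensors) : Prop :=
  exists (u w : nat -> nat -> R),
    (forall j, (1 <= j <= n)%nat -> rsum (d j) (fun p => (u j p) ^ 2) = 1) /\
    (forall j, (1 <= j < n)%nat -> rsum (D j) (fun b => (w j b) ^ 2) = 1) /\
    (forall j a p b, (1 <= j <= n)%nat -> (a < bdim n D (j - 1))%nat ->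
       (p < d j)%nat -> (b < bdim n D j)%nat ->
       A j a p b = fro_site n d D A j * bvec n w (j - 1) a * u j p * bvec n w j b).

(* Main.v *)
Require Import Defs.
From Stdlib Require Import Reals List Lra Lia Arith ClassicalEpsilon.
Open Scope R_scope.

Lemma rsum_ext m f g : (forall i, (i < m)%nat -> f i = g i) -> rsum m f = rsum m g.
Proof. induction m; simpl; intros H; auto. rewrite IHm by (intros; apply H; lia).
  rewrite H by lia. reflexivity. Qed.
Lemma rsum_plus m f g : rsum m (fun i => f i + g i) = rsum m f + rsum m g.
Proof. induction m; simpl; [lra| rewrite IHm; lra]. Qed.
Lemma rsum_scal m c f : rsum m (fun i => c * f i) = c * rsum m f.
Proof. induction m; simpl; [lra| rewrite IHm; lra]. Qed.
Lemma rsum_zero m : rsum m (fun _ => 0) = 0.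
Proof. induction m; simpl; [lra| rewrite IHm; lra]. Qed.
Lemma rsum_const m c : rsum m (fun _ => c) = INR m * c.
Proof. induction m; simpl rsum; [simpl; lra| rewrite IHm, S_INR; lra]. Qed.
Lemma rsum_le m f g : (forall i, (i < m)%nat -> f i <= g i) -> rsum m f <= rsum m g.
Proof. induction m; simpl; intros H; [lra|]. assert (H1 := H m ltac:(lia)).
  assert (rsum m f <= rsum m g) by (apply IHm; intros; apply H; lia). lra. Qed.
Lemma rsum_nonneg m f : (forall i, (i < m)%nat -> 0 <= f i) -> 0 <= rsum m f.
Proof. intros H. rewrite <- (rsum_zero m). apply rsum_le; auto. Qed.
Lemma rsum_swap m1 m2 (f : nat -> nat -> R) :
  rsum m1 (fun i => rsum m2 (fun j => f i j)) = rsum m2 (fun j => rsum m1 (fun i => f i j)).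
Proof. induction m1; simpl. symmetry; apply rsum_zero.
  rewrite IHm1, <- rsum_plus. reflexivity. Qed.
Lemma rsum_single m f k : (k < m)%nat -> (forall i, (i < m)%nat -> 0 <= f i) -> f k <= rsum m f.
Proof. induction m; intros Hk H; [lia|]. simpl.
  destruct (Nat.eq_dec k m). subst. assert (0 <= rsum m f) by (apply rsum_nonneg; intros; apply H; lia). lra.
  assert (f k <= rsum m f) by (apply IHm; [lia| intros; apply H; lia]). assert (0 <= f m) by (apply H; lia). lra. Qed.

Lemma msum_ext ds f g : (forall l, Forall2 lt l ds -> f l = g l) -> msum ds f = msum ds g.
Proof. revert f g; induction ds; simpl; intros f g H. apply H; constructor.
  apply rsum_ext; intros. apply IHds; intros; apply H; constructor; auto. Qed.
Lemma msum_plus ds f g : msum ds (fun l => f l + g l) = msum ds f + msum ds g.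
Proof. revert f g; induction ds; simpl; intros; auto.
  rewrite <- rsum_plus. apply rsum_ext; intros; apply IHds. Qed.
Lemma msum_scal ds c f : msum ds (fun l => c * f l) = c * msum ds f.
Proof. revert f; induction ds; simpl; intros; auto.
  rewrite <- rsum_scal. apply rsum_ext; intros; apply IHds. Qed.
Lemma msum_le ds f g : (forall l, Forall2 lt l ds -> f l <= g l) -> msum ds f <= msum ds g.
Proof. revert f g; induction ds; simpl; intros f g H. apply H; constructor.
  apply rsum_le; intros. apply IHds; intros; apply H; constructor; auto. Qed.
Lemma msum_zero ds : msum ds (fun _ => 0) = 0.
Proof. induction ds; simpl; auto. transitivity (rsum a (fun _ => 0)). apply rsum_ext; intros; exact IHds. apply rsum_zero. Qed.
Lemma msum_nonneg ds f : (forall l, Forall2 lt l ds -> 0 <= f l) -> 0 <= msum ds f.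
Proof. intros H. rewrite <- (msum_zero ds). apply msum_le; auto. Qed.
Lemma msum_rsum_swap ds m (f : list nat -> nat -> R) :
  msum ds (fun l => rsum m (fun i => f l i)) = rsum m (fun i => msum ds (fun l => f l i)).
Proof. revert f; induction ds; simpl; intros; auto.
  rewrite <- rsum_swap. apply rsum_ext; intros. apply IHds. Qed.
Lemma msum_swap ds1 ds2 (f : list nat -> list nat -> R) :
  msum ds1 (fun l1 => msum ds2 (fun l2 => f l1 l2)) = msum ds2 (fun l2 => msum ds1 (fun l1 => f l1 l2)).
Proof. revert f; induction ds1; simpl; intros; auto.
  rewrite msum_rsum_swap. apply rsum_ext; intros. apply (IHds1 (fun l1 l2 => f (i :: l1) l2)).
Qed.
Lemma msum_app ds1 ds2 f : msum (ds1 ++ ds2) f = msum ds1 (fun l1 => msum ds2 (fun l2 => f (l1 ++ l2))).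
Proof. revert f; induction ds1; simpl; intros; auto. apply rsum_ext; intros. rewrite IHds1. reflexivity. Qed.
Lemma msum_single ds f ps : Forall2 lt ps ds -> (forall l, Forall2 lt l ds -> 0 <= f l) -> f ps <= msum ds f.
Proof. intros H; revert f; induction H; simpl; intros f Hf. lra.
  apply Rle_trans with (msum l' (fun l0 => f (x :: l0))).
  apply (IHForall2 (fun l0 => f (x :: l0))). intros; apply Hf; constructor; auto.
  apply (rsum_single _ (fun i => msum l' (fun l0 => f (i :: l0)))). auto.
  intros. apply msum_nonneg. intros; apply Hf; constructor; auto. Qed.

Lemma quad_disc a b c : 0 <= a -> (forall t, 0 <= a*t^2 + 2*b*t + c) -> b^2 <= a*c.
Proof. intros Ha H. destruct (Req_dec a 0) as [Ha0|Ha0].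
  - subst. destruct (Req_dec b 0). subst; lra.
    specialize (H (-(c+1)/(2*b))). exfalso.
    replace (0 * (-(c+1)/(2*b))^2 + 2*b*(-(c+1)/(2*b)) + c) with (-1) in H by (field; auto). lra.
  - specialize (H (-b/a)).
    replace (a * (- b / a) ^ 2 + 2 * b * (- b / a) + c) with ((a*c - b^2)/a) in H by (field; auto).
    assert (0 < a) by lra. assert (0 <= a*c - b^2). { apply Rmult_le_reg_r with (/a). apply Rinv_0_lt_compat; auto.
    rewrite Rmult_0_l. exact H. } lra. Qed.

Lemma msum_CS ds f g : (msum ds (fun l => f l * g l))^2 <= msum ds (fun l => f l ^2) * msum ds (fun l => g l ^2).
Proof. apply quad_disc. apply msum_nonneg; intros; apply pow2_ge_0.
  intros t. assert (E: msum ds (fun l => (t * f l + g l)^2) =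
    msum ds (fun l => f l ^ 2) * t^2 + 2 * msum ds (fun l => f l * g l) * t + msum ds (fun l => g l ^2)).
  { transitivity (msum ds (fun l => t^2 * f l ^2 + 2*t * (f l * g l) + g l^2)). apply msum_ext; intros; ring.
    rewrite !msum_plus, !msum_scal. ring. }
  rewrite <- E. apply msum_nonneg; intros; apply pow2_ge_0. Qed.

Lemma rsum_CS m f g : (rsum m (fun i => f i * g i))^2 <= rsum m (fun i => f i ^2) * rsum m (fun i => g i ^2).
Proof. exact (msum_CS (m :: nil) (fun l => f (hd 0%nat l)) (fun l => g (hd 0%nat l))). Qed.

Lemma sqrt_le_of_sq x y : 0 <= y -> x <= y^2 -> sqrt x <= y.
Proof. intros Hy H. rewrite <- (sqrt_pow2 y Hy). apply sqrt_le_1_alt; auto. Qed.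

Lemma msum_mink ds f g : sqrt (msum ds (fun l => (f l + g l)^2)) <=
   sqrt (msum ds (fun l => f l ^2)) + sqrt (msum ds (fun l => g l ^2)).
Proof. set (a := msum ds (fun l => f l ^2)). set (c := msum ds (fun l => g l ^2)).
  set (b := msum ds (fun l => f l * g l)).
  assert (Ha : 0 <= a) by (apply msum_nonneg; intros; apply pow2_ge_0).
  assert (Hc : 0 <= c) by (apply msum_nonneg; intros; apply pow2_ge_0).
  assert (Hb : b^2 <= a * c) by apply msum_CS.
  assert (E: msum ds (fun l => (f l + g l)^2) = a + 2*b + c).
  { unfold a, b, c. transitivity (msum ds (fun l => f l ^2 + 2 * (f l * g l) + g l^2)). apply msum_ext; intros; ring.
    rewrite !msum_plus, !msum_scal. ring. }
  rewrite E. apply sqrt_le_of_sq. pose proof (sqrt_pos a); pose proof (sqrt_pos c); lra.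
  assert (b <= sqrt a * sqrt c).
  { rewrite <- sqrt_mult by auto. destruct (Rle_lt_dec b 0). pose proof (sqrt_pos (a*c)); lra.
    rewrite <- (sqrt_pow2 b) by lra. apply sqrt_le_1_alt; auto. }
  replace ((sqrt a + sqrt c)^2) with (sqrt a * sqrt a + sqrt c * sqrt c + 2 * (sqrt a * sqrt c)) by ring.
  rewrite !sqrt_sqrt by auto. lra. Qed.

Lemma msum_mink_sum ds m (t : nat -> list nat -> R) :
  sqrt (msum ds (fun l => (rsum m (fun i => t i l))^2)) <= rsum m (fun i => sqrt (msum ds (fun l => (t i l)^2))).
Proof. induction m; simpl.
  - right. transitivity (sqrt (msum ds (fun _ => 0))). f_equal. apply msum_ext; intros; ring.
    rewrite msum_zero, sqrt_0. reflexivity.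
  - eapply Rle_trans. apply (msum_mink ds (fun l => rsum m (fun i => t i l)) (t m)). apply Rplus_le_compat_r; exact IHm. Qed.

Definition OpB ds m (M : list nat -> nat -> R) al :=
  0 <= al /\ forall x, msum ds (fun r => (rsum m (fun c => M r c * x c))^2) <= al^2 * rsum m (fun c => (x c)^2).

Definition mfro ds m (M : list nat -> nat -> R) := sqrt (msum ds (fun r => rsum m (fun c => (M r c)^2))).

Lemma mfro_OpB ds m M : OpB ds m M (mfro ds m M).
Proof. split. apply sqrt_pos. intros x. unfold mfro. rewrite pow2_sqrt.
  rewrite Rmult_comm, <- msum_scal. apply msum_le; intros. rewrite Rmult_comm. apply rsum_CS.
  apply msum_nonneg; intros; apply rsum_nonneg; intros; apply pow2_ge_0. Qed.

Lemma OpB_mono ds m M a b : OpB ds m M a -> a <= b -> OpB ds m M b.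
Proof. intros [Ha H] Hab. split. lra. intros x. eapply Rle_trans. apply H.
  apply Rmult_le_compat_r. apply rsum_nonneg; intros; apply pow2_ge_0.
  apply pow_incr; lra. Qed.

Lemma OpB_ext ds m M N a : (forall r c, M r c = N r c) -> OpB ds m M a -> OpB ds m N a.
Proof. intros E [Ha H]. split; auto. intros x. eapply Rle_trans; [|apply H]. right.
  apply msum_ext; intros; f_equal. apply rsum_ext; intros; rewrite E; auto. Qed.

Lemma OpB_add ds m M N a b : OpB ds m M a -> OpB ds m N b -> OpB ds m (fun r c => M r c + N r c) (a + b).
Proof. intros [Ha HM] [Hb HN]. split. lra. intros x.
  set (s := rsum m (fun c => (x c)^2)).
  assert (Hs : 0 <= s) by (apply rsum_nonneg; intros; apply pow2_ge_0).
  assert (E : msum ds (fun r => (rsum m (fun c => (M r c + N r c) * x c))^2) =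
    msum ds (fun r => (rsum m (fun c => M r c * x c) + rsum m (fun c => N r c * x c))^2)).
  { apply msum_ext; intros; f_equal. rewrite <- rsum_plus. apply rsum_ext; intros; ring. }
  rewrite E; clear E.
  pose proof (msum_mink ds (fun r => rsum m (fun c => M r c * x c)) (fun r => rsum m (fun c => N r c * x c))) as Hm. cbv beta in Hm.
  assert (H1 : sqrt (msum ds (fun r => (rsum m (fun c => M r c * x c))^2)) <= a * sqrt s).
  { rewrite <- (sqrt_pow2 a Ha), <- sqrt_mult by (auto; apply pow2_ge_0). apply sqrt_le_1_alt. apply HM. }
  assert (H2 : sqrt (msum ds (fun r => (rsum m (fun c => N r c * x c))^2)) <= b * sqrt s).
  { rewrite <- (sqrt_pow2 b Hb), <- sqrt_mult by (auto; apply pow2_ge_0). apply sqrt_le_1_alt. apply HN. }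
  set (X := msum ds _) in *.
  assert (HX : 0 <= X) by (apply msum_nonneg; intros; apply pow2_ge_0).
  assert (sqrt X <= (a+b) * sqrt s) by (rewrite Rmult_plus_distr_r; lra).
  replace ((a+b)^2 * s) with (((a+b) * sqrt s)^2).
  rewrite <- (sqrt_sqrt X HX). replace (sqrt X * sqrt X) with ((sqrt X)^2) by ring.
  apply pow_incr. split; [apply sqrt_pos| auto].
  rewrite Rpow_mult_distr. rewrite pow2_sqrt; auto. Qed.

Lemma spec_lub ds m M : is_lub (fun y => y = 0 \/
       exists x : nat -> R, rsum m (fun c => (x c) ^ 2) = 1 /\
         y = sqrt (msum ds (fun r => (rsum m (fun c => M r c * x c)) ^ 2))) (spec_norm ds m M).
Proof. unfold spec_norm. apply epsilon_spec.
  destruct (completeness (fun y => y = 0 \/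
       exists x : nat -> R, rsum m (fun c => (x c) ^ 2) = 1 /\
         y = sqrt (msum ds (fun r => (rsum m (fun c => M r c * x c)) ^ 2)))) as [z Hz].
  - exists (mfro ds m M). intros y [->|[x [Hx ->]]]. apply sqrt_pos.
    destruct (mfro_OpB ds m M) as [H0 H]. apply sqrt_le_of_sq; auto. rewrite <- (Rmult_1_r (_ ^2)), <- Hx. apply H.
  - exists 0; auto.
  - exists z; auto. Qed.

Lemma spec_nonneg ds m M : 0 <= spec_norm ds m M.
Proof. destruct (spec_lub ds m M) as [H _]. apply H. auto. Qed.

Lemma spec_le ds m M K : 0 <= K ->
  (forall x, rsum m (fun c => (x c)^2) = 1 -> msum ds (fun r => (rsum m (fun c => M r c * x c))^2) <= K^2) ->
  spec_norm ds m M <= K.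
Proof. intros HK H. destruct (spec_lub ds m M) as [_ H2]. apply H2.
  intros y [->|[x [Hx ->]]]; auto. apply sqrt_le_of_sq; auto. Qed.

Lemma spec_OpB ds m M : OpB ds m M (spec_norm ds m M).
Proof. split. apply spec_nonneg. intros x.
  set (s := rsum m (fun c => (x c)^2)).
  assert (Hs : 0 <= s) by (apply rsum_nonneg; intros; apply pow2_ge_0).
  destruct (Req_dec s 0) as [Hs0|Hs0].
  - rewrite Hs0, Rmult_0_r. transitivity (msum ds (fun _ => 0)). apply msum_le; intros.
    eapply Rle_trans. apply rsum_CS. fold s. rewrite Hs0. lra. rewrite msum_zero; lra.
  - assert (Hsp : 0 < s) by lra.
    destruct (spec_lub ds m M) as [Hub _].
    set (y := fun c => x c / sqrt s).
    assert (Hy : rsum m (fun c => (y c)^2) = 1).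
    { unfold y. transitivity (rsum m (fun c => / s * (x c)^2)). apply rsum_ext; intros.
      unfold Rdiv. rewrite Rpow_mult_distr, pow_inv, pow2_sqrt by lra. ring.
      rewrite rsum_scal. fold s. field. lra. }
    assert (H1 := Hub _ (or_intror (ex_intro _ y (conj Hy eq_refl)))). simpl in H1.
    assert (E : msum ds (fun r => (rsum m (fun c => M r c * y c))^2) = / s * msum ds (fun r => (rsum m (fun c => M r c * x c))^2)).
    { rewrite <- msum_scal. apply msum_ext; intros. unfold y.
      transitivity ((/ sqrt s * rsum m (fun c => M l c * x c))^2).
      f_equal. rewrite <- rsum_scal. apply rsum_ext; intros. unfold Rdiv; ring.
      rewrite Rpow_mult_distr, pow_inv, pow2_sqrt by lra. reflexivity. }
    change (sqrt (msum ds (fun r => (rsum m (fun c => M r c * y c))^2)) <= spec_norm ds m M) in H1.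
    rewrite E in H1. set (X := msum ds _) in *.
    assert (HX : 0 <= X) by (apply msum_nonneg; intros; apply pow2_ge_0).
    assert (H2 : / s * X <= (spec_norm ds m M)^2).
    { rewrite <- (sqrt_sqrt (/ s * X)). replace (spec_norm ds m M ^2) with (spec_norm ds m M * spec_norm ds m M) by ring.
      apply Rmult_le_compat; auto using sqrt_pos. apply Rmult_le_pos; auto. left; apply Rinv_0_lt_compat; auto. }
    apply Rmult_le_reg_l with (/ s). apply Rinv_0_lt_compat; auto.
    replace (/ s * (spec_norm ds m M ^2 * s)) with (spec_norm ds m M ^2) by (field; lra). exact H2. Qed.

Lemma lenv_app n D A k l l' b : (k <= length l)%nat -> lenv n D A k (l ++ l') b = lenv n D A k l b.
Proof. revert b; induction k; intros b Hk; simpl; auto. apply rsum_ext; intros.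
  rewrite IHk by lia. rewrite app_nth1 by lia. reflexivity. Qed.

Lemma lenv_ext n D A A' k : (forall j a p b, (1 <= j <= k)%nat -> A j a p b = A' j a p b) ->
  forall ps b, lenv n D A k ps b = lenv n D A' k ps b.
Proof. induction k; intros H ps b; simpl; auto. apply rsum_ext; intros.
  rewrite IHk by (intros; apply H; lia). rewrite H by lia. reflexivity. Qed.

Lemma renv_ext n D A A' k : (k <= n)%nat -> (forall j a p b, (n - k < j)%nat -> A j a p b = A' j a p b) ->
  forall ps b, renv n D A k ps b = renv n D A' k ps b.
Proof. induction k; intros Hk H ps b; simpl; auto. apply rsum_ext; intros.
  rewrite IHk by (try lia; intros; apply H; lia). rewrite H by lia. reflexivity. Qed.

Lemma renv_S n D A k ps b : renv n D A (S k) ps b =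
  rsum (bdim n D (n - k)) (fun c => A (n - k)%nat b (hd 0%nat ps) c * renv n D A k (tl ps) c).
Proof. reflexivity. Qed.
Lemma lenv_S n D A k ps b : lenv n D A (S k) ps b =
  rsum (bdim n D k) (fun a => lenv n D A k ps a * A (S k) a (nth k ps 0%nat) b).
Proof. reflexivity. Qed.

Lemma hd_skipn k (ps : list nat) : hd 0%nat (skipn k ps) = nth k ps 0%nat.
Proof. revert ps; induction k; destruct ps; simpl; auto. Qed.
Lemma tl_skipn k (ps : list nat) : tl (skipn k ps) = skipn (S k) ps.
Proof. revert ps; induction k; destruct ps; simpl; auto. Qed.

Lemma contr_split_aux n D A ps m : (m <= n)%nat ->
  contr n D A ps = rsum (bdim n D (n - m)) (fun a => lenv n D A (n - m) ps a * renv n D A m (skipn (n - m) ps) a).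
Proof. induction m; intros Hm.
  - rewrite Nat.sub_0_r. unfold bdim. rewrite Nat.leb_refl, Bool.orb_true_r. simpl. unfold contr. rewrite Rplus_0_l, Rmult_1_r; reflexivity.
  - rewrite IHm by lia. set (k := (n - S m)%nat). replace (n - m)%nat with (S k) by lia.
    transitivity (rsum (bdim n D (S k)) (fun c => rsum (bdim n D k) (fun a =>
       lenv n D A k ps a * A (S k) a (nth k ps 0%nat) c * renv n D A m (skipn (S k) ps) c))).
    apply rsum_ext; intros. rewrite lenv_S, Rmult_comm, <- rsum_scal. apply rsum_ext; intros; ring.
    rewrite <- rsum_swap. apply rsum_ext; intros. rewrite renv_S. replace (n - m)%nat with (S k) by lia.
    rewrite hd_skipn, tl_skipn. rewrite <- rsum_scal. apply rsum_ext; intros; ring. Qed.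

Lemma contr_site n D A ps k : (k < n)%nat ->
  contr n D A ps = rsum (bdim n D k) (fun a => rsum (bdim n D (S k)) (fun c =>
     lenv n D A k ps a * A (S k) a (nth k ps 0%nat) c * renv n D A (n - S k) (skipn (S k) ps) c)).
Proof. intros Hk. rewrite (contr_split_aux n D A ps (n - k)) by lia.
  replace (n - (n - k))%nat with k by lia. apply rsum_ext; intros.
  replace (n - k)%nat with (S (n - S k)) by lia. rewrite renv_S.
  replace (n - (n - S k))%nat with (S k) by lia. rewrite hd_skipn, tl_skipn.
  rewrite <- rsum_scal. apply rsum_ext; intros; ring. Qed.

Lemma rsum_minus m f g : rsum m f - rsum m g = rsum m (fun i => f i - g i).
Proof. induction m; simpl; [lra| rewrite <- IHm; lra]. Qed.

Definition hyb (A B : site_tensors) (k : nat) : site_tensors :=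
  fun j => if (j <=? k)%nat then B j else A j.

Definition term n D (A delta : site_tensors) k ps :=
  rsum (bdim n D k) (fun a => rsum (bdim n D (S k)) (fun c =>
     lenv n D (tadd A delta) k ps a * delta (S k) a (nth k ps 0%nat) c * renv n D A (n - S k) (skipn (S k) ps) c)).

Lemma hyb_step n D A delta ps k : (k < n)%nat ->
  contr n D (hyb A (tadd A delta) (S k)) ps - contr n D (hyb A (tadd A delta) k) ps = term n D A delta k ps.
Proof. intros Hk. rewrite !(contr_site n D _ ps k Hk). unfold term.
  rewrite rsum_minus. apply rsum_ext; intros a Ha.
  rewrite rsum_minus. apply rsum_ext; intros c Hc.
  rewrite (lenv_ext n D (hyb A (tadd A delta) (S k)) (tadd A delta)) by (intros; unfold hyb;
    replace (j <=? S k)%nat with true by (symmetry; apply Nat.leb_le; lia); auto).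
  rewrite (lenv_ext n D (hyb A (tadd A delta) k) (tadd A delta)) by (intros; unfold hyb;
    replace (j <=? k)%nat with true by (symmetry; apply Nat.leb_le; lia); auto).
  rewrite (renv_ext n D (hyb A (tadd A delta) (S k)) A) by (try lia; intros; unfold hyb;
    replace (j <=? S k)%nat with false by (symmetry; apply Nat.leb_gt; lia); auto).
  rewrite (renv_ext n D (hyb A (tadd A delta) k) A) by (try lia; intros; unfold hyb;
    replace (j <=? k)%nat with false by (symmetry; apply Nat.leb_gt; lia); auto).
  unfold hyb. rewrite Nat.leb_refl. replace (S k <=? k)%nat with false by (symmetry; apply Nat.leb_gt; lia).
  unfold tadd. ring. Qed.

Lemma telescope n D A delta ps :
  contr n D (tadd A delta) ps - contr n D A ps = rsum n (fun k => term n D A delta k ps).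
Proof.
  assert (E1 : contr n D (tadd A delta) ps = contr n D (hyb A (tadd A delta) n) ps).
  { unfold contr. apply lenv_ext. intros. unfold hyb. replace (j <=? n)%nat with true by (symmetry; apply Nat.leb_le; lia); auto. }
  assert (E0 : contr n D A ps = contr n D (hyb A (tadd A delta) 0) ps).
  { unfold contr. apply lenv_ext. intros. unfold hyb. replace (j <=? 0)%nat with false by (symmetry; apply Nat.leb_gt; lia); auto. }
  rewrite E1, E0.
  assert (G : forall m, (m <= n)%nat -> contr n D (hyb A (tadd A delta) m) ps - contr n D (hyb A (tadd A delta) 0) ps
     = rsum m (fun k => term n D A delta k ps)).
  { induction m; intros Hm; simpl. lra. rewrite <- IHm by lia. rewrite <- hyb_step by lia. ring. }
  apply G; lia. Qed.

Lemma pdims_split d n k : (k < n)%nat ->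
  pdims d 1 n = pdims d 1 k ++ d (S k) :: pdims d (S k + 1) (n - S k).
Proof. intros Hk. unfold pdims. replace n with (k + S (n - S k))%nat at 1 by lia.
  rewrite seq_app, map_app. f_equal. simpl. rewrite Nat.add_1_r. reflexivity. Qed.

Lemma pdims_snoc d k : pdims d 1 (S k) = pdims d 1 k ++ d (S k) :: nil.
Proof. unfold pdims. rewrite seq_S, map_app. reflexivity. Qed.

Lemma pdims_length d i k : length (pdims d i k) = k.
Proof. unfold pdims. rewrite length_map, length_seq. auto. Qed.

Lemma skipn_mid k (l1 : list nat) p l2 : length l1 = k -> skipn (S k) (l1 ++ p :: l2) = l2.
Proof. revert k; induction l1; intros k Hk; simpl in *; subst; simpl; auto. Qed.

Lemma tri_bound ds1 m1 ds2 ma mc L (X : nat -> nat -> nat -> R) R al be :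
 OpB ds1 ma L al -> OpB ds2 mc R be ->
 msum ds1 (fun l1 => rsum m1 (fun p => msum ds2 (fun l2 =>
     (rsum ma (fun a => rsum mc (fun c => L l1 a * X a p c * R l2 c)))^2)))
 <= al^2 * be^2 * rsum ma (fun a => rsum m1 (fun p => rsum mc (fun c => (X a p c)^2))).
Proof.
  intros [Hal HL] [Hbe HR].
  transitivity (rsum m1 (fun p => msum ds2 (fun l2 => msum ds1 (fun l1 =>
     (rsum ma (fun a => L l1 a * rsum mc (fun c => R l2 c * X a p c)))^2)))).
  { right. rewrite (msum_rsum_swap ds1 m1 (fun l1 p => msum ds2 (fun l2 =>
     (rsum ma (fun a => rsum mc (fun c => L l1 a * X a p c * R l2 c)))^2))).
    apply rsum_ext; intros p _. rewrite msum_swap. apply msum_ext; intros l2 _. apply msum_ext; intros l1 _.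
    f_equal. apply rsum_ext; intros a _. rewrite <- rsum_scal. apply rsum_ext; intros; ring. }
  transitivity (rsum m1 (fun p => al^2 * (be^2 * rsum ma (fun a => rsum mc (fun c => (X a p c)^2))))).
  { apply rsum_le; intros p _.
    transitivity (msum ds2 (fun l2 => al^2 * rsum ma (fun a => (rsum mc (fun c => R l2 c * X a p c))^2))).
    apply msum_le; intros l2 _. apply (HL (fun a => rsum mc (fun c => R l2 c * X a p c))).
    rewrite msum_scal. apply Rmult_le_compat_l. apply pow2_ge_0.
    rewrite (msum_rsum_swap ds2 ma (fun l2 a => (rsum mc (fun c => R l2 c * X a p c))^2)).
    rewrite <- rsum_scal. apply rsum_le; intros a _. apply (HR (fun c => X a p c)). }
  right. rewrite rsum_scal. rewrite rsum_scal. rewrite <- Rmult_assoc. f_equal.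
  rewrite rsum_swap. apply rsum_ext; intros a _. reflexivity. Qed.

Lemma FC_bound ds m1 mb ma M (Y : nat -> nat -> nat -> R) :
  msum ds (fun l => rsum m1 (fun p => rsum mb (fun b => (rsum ma (fun a => M l a * Y a p b))^2)))
  <= msum ds (fun l => rsum ma (fun a => (M l a)^2)) * rsum ma (fun a => rsum m1 (fun p => rsum mb (fun b => (Y a p b)^2))).
Proof.
  transitivity (msum ds (fun l => rsum ma (fun a => (M l a)^2) * rsum m1 (fun p => rsum mb (fun b => rsum ma (fun a => (Y a p b)^2))))).
  { apply msum_le; intros. rewrite <- (rsum_scal m1). apply rsum_le; intros. rewrite <- (rsum_scal mb). apply rsum_le; intros.
    apply rsum_CS. }
  right. transitivity (msum ds (fun l => rsum ma (fun a => rsum m1 (fun p => rsum mb (fun b => (Y a p b)^2))) * rsum ma (fun a => (M l a)^2))).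
  apply msum_ext; intros. rewrite Rmult_comm. f_equal.
  transitivity (rsum m1 (fun p => rsum ma (fun a => rsum mb (fun b => (Y a p b)^2)))).
  apply rsum_ext; intros. apply rsum_swap. apply rsum_swap.
  rewrite msum_scal. apply Rmult_comm. Qed.

Lemma sq_sum_le a b : (a + b)^2 <= 2 * a^2 + 2 * b^2.
Proof. pose proof (pow2_ge_0 (a - b)). nra. Qed.

Definition ssite n d D (X : site_tensors) k :=
  rsum (bdim n D k) (fun a => rsum (d (S k)) (fun p => rsum (bdim n D (S k)) (fun b => (X (S k) a p b)^2))).

Lemma fro_site_S n d D X k : fro_site n d D X (S k) = sqrt (ssite n d D X k).
Proof. unfold fro_site, ssite. replace (S k - 1)%nat with k by lia. reflexivity. Qed.

Lemma ssite_nonneg n d D X k : 0 <= ssite n d D X k.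
Proof. unfold ssite. repeat (apply rsum_nonneg; intros). apply pow2_ge_0. Qed.

Lemma ssite_add n d D A delta k : ssite n d D (tadd A delta) k <= 2 * ssite n d D A k + 2 * ssite n d D delta k.
Proof. unfold ssite. rewrite <- !rsum_scal, <- rsum_plus. apply rsum_le; intros.
  rewrite <- !rsum_scal, <- rsum_plus. apply rsum_le; intros.
  rewrite <- !rsum_scal, <- rsum_plus. apply rsum_le; intros. unfold tadd. apply sq_sum_le. Qed.

Lemma ssite_pert n d D A delta eps k : (k < n)%nat -> 0 < eps ->
  is_eps_perturbation n d D A delta eps -> ssite n d D delta k <= eps^2 * ssite n d D A k.
Proof. intros Hk He H. specialize (H (S k) ltac:(lia)). rewrite !fro_site_S in H.
  pose proof (ssite_nonneg n d D delta k). pose proof (ssite_nonneg n d D A k).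
  rewrite <- (sqrt_sqrt (ssite n d D delta k)) by auto. rewrite <- (sqrt_sqrt (ssite n d D A k)) by auto.
  pose proof (sqrt_pos (ssite n d D delta k)).
  replace (eps ^ 2 * (sqrt (ssite n d D A k) * sqrt (ssite n d D A k))) with
    ((eps * sqrt (ssite n d D A k)) * (eps * sqrt (ssite n d D A k))) by ring.
  apply Rmult_le_compat; auto. Qed.

Definition Lfro2 n d D (M : list nat -> nat -> R) k :=
  msum (pdims d 1 k) (fun ps => rsum (bdim n D k) (fun b => (M ps b)^2)).

Lemma Lfro2_nonneg n d D M k : 0 <= Lfro2 n d D M k.
Proof. unfold Lfro2. apply msum_nonneg; intros; apply rsum_nonneg; intros; apply pow2_ge_0. Qed.

Definition Ediff n d D A delta k := Lfro2 n d D (fun ps b => lenv n D (tadd A delta) k ps b - lenv n D A k ps b) k.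

Lemma lenv_snoc n D A k l p b : length l = k ->
  lenv n D A (S k) (l ++ p :: nil) b = rsum (bdim n D k) (fun a => lenv n D A k l a * A (S k) a p b).
Proof. intros Hl. rewrite lenv_S. apply rsum_ext; intros. rewrite lenv_app by lia.
  rewrite app_nth2 by lia. replace (k - length l)%nat with 0%nat by lia. reflexivity. Qed.

Lemma Ediff_step n d D A delta k :
  Ediff n d D A delta (S k) <= 2 * Ediff n d D A delta k * ssite n d D (tadd A delta) k
     + 2 * Lfro2 n d D (lenv n D A k) k * ssite n d D delta k.
Proof.
  unfold Ediff, Lfro2 at 1. rewrite pdims_snoc, msum_app.
  set (B := tadd A delta).
  transitivity (msum (pdims d 1 k) (fun l => rsum (d (S k)) (fun p => rsum (bdim n D (S k)) (fun b =>
      2 * (rsum (bdim n D k) (fun a => (lenv n D B k l a - lenv n D A k l a) * B (S k) a p b))^2 +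
      2 * (rsum (bdim n D k) (fun a => lenv n D A k l a * delta (S k) a p b))^2)))).
  { apply msum_le; intros l Hl. apply Forall2_length in Hl. rewrite pdims_length in Hl.
    cbn [msum]. apply rsum_le; intros p _. apply rsum_le; intros b _.
    rewrite !lenv_snoc by auto. rewrite rsum_minus.
    eapply Rle_trans; [|apply sq_sum_le]. right. f_equal. rewrite <- rsum_plus. apply rsum_ext; intros.
    unfold B, tadd. ring. }
  assert (H1 := FC_bound (pdims d 1 k) (d (S k)) (bdim n D (S k)) (bdim n D k)
     (fun l a => lenv n D B k l a - lenv n D A k l a) (fun a p b => B (S k) a p b)).
  assert (H2 := FC_bound (pdims d 1 k) (d (S k)) (bdim n D (S k)) (bdim n D k)
     (fun l a => lenv n D A k l a) (fun a p b => delta (S k) a p b)).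
  rewrite !Rmult_assoc.
  transitivity (2 * msum (pdims d 1 k) (fun l => rsum (d (S k)) (fun p => rsum (bdim n D (S k)) (fun b =>
      (rsum (bdim n D k) (fun a => (lenv n D B k l a - lenv n D A k l a) * B (S k) a p b))^2))) +
    2 * msum (pdims d 1 k) (fun l => rsum (d (S k)) (fun p => rsum (bdim n D (S k)) (fun b =>
      (rsum (bdim n D k) (fun a => lenv n D A k l a * delta (S k) a p b))^2)))).
  { right. rewrite <- !msum_scal, <- msum_plus. apply msum_ext; intros.
    rewrite <- !rsum_scal, <- rsum_plus. apply rsum_ext; intros.
    rewrite <- !rsum_scal, <- rsum_plus. apply rsum_ext; intros. ring. }
  apply Rplus_le_compat; apply Rmult_le_compat_l; try lra.
  - eapply Rle_trans. apply H1. right. f_equal.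
  - eapply Rle_trans. apply H2. right. f_equal. Qed.

Fixpoint Kc n d D A k : R := match k with
  | O => 0
  | S k' => 8 * Kc n d D A k' * ssite n d D A k' + 2 * Lfro2 n d D (lenv n D A k') k' * ssite n d D A k'
  end.

Lemma Kc_nonneg n d D A k : 0 <= Kc n d D A k.
Proof. induction k; simpl. lra. pose proof (ssite_nonneg n d D A k). pose proof (Lfro2_nonneg n d D (lenv n D A k) k).
  apply Rplus_le_le_0_compat; repeat apply Rmult_le_pos; lra. Qed.

Lemma Ediff_nonneg n d D A delta k : 0 <= Ediff n d D A delta k.
Proof. apply Lfro2_nonneg. Qed.

Lemma Ediff_bound n d D A delta eps : 0 < eps <= 1 -> is_eps_perturbation n d D A delta eps ->
  forall k, (k <= n)%nat -> Ediff n d D A delta k <= Kc n d D A k * eps^2.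
Proof. intros He Hp. induction k; intros Hk.
  - unfold Ediff, Lfro2. simpl. nra.
  - eapply Rle_trans. apply Ediff_step.
    assert (IH := IHk ltac:(lia)).
    pose proof (ssite_nonneg n d D A k) as HA. pose proof (ssite_nonneg n d D delta k) as Hd.
    pose proof (ssite_nonneg n d D (tadd A delta) k) as HB.
    pose proof (Lfro2_nonneg n d D (lenv n D A k) k) as HF.
    pose proof (Ediff_nonneg n d D A delta k) as HE.
    pose proof (Kc_nonneg n d D A k) as HK.
    assert (Hdl := ssite_pert n d D A delta eps k ltac:(lia) ltac:(lra) Hp).
    assert (HBl := ssite_add n d D A delta k).
    assert (He2 : eps^2 <= 1) by nra.
    assert (HB4 : ssite n d D (tadd A delta) k <= 4 * ssite n d D A k) by nra.
    simpl Kc.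
    assert (T1 : Ediff n d D A delta k * ssite n d D (tadd A delta) k <= (Kc n d D A k * eps^2) * (4 * ssite n d D A k))
      by (apply Rmult_le_compat; auto).
    assert (T2 : Lfro2 n d D (lenv n D A k) k * ssite n d D delta k <= Lfro2 n d D (lenv n D A k) k * (eps^2 * ssite n d D A k))
      by (apply Rmult_le_compat_l; auto).
    nra. Qed.

Lemma lnorm_S n d D A k : lnorm n d D A (S k) = spec_norm (pdims d 1 k) (bdim n D k) (lenv n D A k).
Proof. unfold lnorm. replace (S k - 1)%nat with k by lia. reflexivity. Qed.

Lemma term_sq n d D A delta k : (k < n)%nat ->
  msum (pdims d 1 n) (fun ps => (term n D A delta k ps)^2) =
  msum (pdims d 1 k) (fun l1 => rsum (d (S k)) (fun p => msum (pdims d (S k + 1) (n - S k)) (fun l2 =>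
    (rsum (bdim n D k) (fun a => rsum (bdim n D (S k)) (fun c =>
       lenv n D (tadd A delta) k l1 a * delta (S k) a p c * renv n D A (n - S k) l2 c)))^2))).
Proof. intros Hk. rewrite (pdims_split d n k Hk), msum_app. apply msum_ext; intros l1 Hl1.
  apply Forall2_length in Hl1. rewrite pdims_length in Hl1.
  cbn [msum]. apply rsum_ext; intros p _. apply msum_ext; intros l2 _. f_equal. unfold term.
  apply rsum_ext; intros a _; apply rsum_ext; intros c _.
  rewrite lenv_app by lia. rewrite app_nth2 by lia. replace (k - length l1)%nat with 0%nat by lia.
  rewrite (skipn_mid k) by auto. reflexivity. Qed.

Lemma term_bound n d D A delta eps k : (k < n)%nat -> 0 < eps <= 1 -> is_eps_perturbation n d D A delta eps ->
  sqrt (msum (pdims d 1 n) (fun ps => (term n D A delta k ps)^2)) <=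
  (lnorm n d D A (S k) + sqrt (Kc n d D A k) * eps) * (eps * fro_site n d D A (S k)) * rnorm n d D A (S k).
Proof. intros Hk He Hp.
  set (al := lnorm n d D A (S k) + sqrt (Kc n d D A k) * eps).
  assert (HL : OpB (pdims d 1 k) (bdim n D k) (lenv n D (tadd A delta) k) al).
  { apply (OpB_ext _ _ (fun r c => lenv n D A k r c + (lenv n D (tadd A delta) k r c - lenv n D A k r c))).
    intros; ring.
    apply OpB_mono with (spec_norm (pdims d 1 k) (bdim n D k) (lenv n D A k) +
       mfro (pdims d 1 k) (bdim n D k) (fun r c => lenv n D (tadd A delta) k r c - lenv n D A k r c)).
    apply OpB_add. apply spec_OpB. apply mfro_OpB.
    unfold al. rewrite lnorm_S. apply Rplus_le_compat_l.
    change (sqrt (Ediff n d D A delta k) <= sqrt (Kc n d D A k) * eps).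
    rewrite <- (sqrt_pow2 eps) by lra. rewrite <- sqrt_mult by (try apply Kc_nonneg; apply pow2_ge_0).
    apply sqrt_le_1_alt. apply Ediff_bound with (1:=He); auto; lia. }
  assert (HR := spec_OpB (pdims d (S k + 1) (n - S k)) (bdim n D (S k)) (renv n D A (n - S k))).
  fold (rnorm n d D A (S k)) in HR.
  assert (HT := tri_bound _ (d (S k)) _ _ _ _ (fun a p c => delta (S k) a p c) _ _ _ HL HR).
  rewrite <- term_sq in HT by auto. fold (ssite n d D delta k) in HT.
  assert (Hdl := ssite_pert n d D A delta eps k Hk ltac:(lra) Hp).
  assert (Hal : 0 <= al) by (destruct HL; auto). assert (Hr : 0 <= rnorm n d D A (S k)) by (destruct HR; auto).
  apply sqrt_le_of_sq.
  apply Rmult_le_pos; [apply Rmult_le_pos; auto; apply Rmult_le_pos; [lra| apply sqrt_pos]| auto].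
  rewrite fro_site_S. eapply Rle_trans. apply HT.
  replace ((al * (eps * sqrt (ssite n d D A k)) * rnorm n d D A (S k)) ^ 2) with
    (al^2 * rnorm n d D A (S k)^2 * (eps^2 * (sqrt (ssite n d D A k))^2)) by ring.
  rewrite pow2_sqrt by apply ssite_nonneg.
  apply Rmult_le_compat_l; auto. apply Rmult_le_pos; apply pow2_ge_0. Qed.

Lemma fro_full_pos n d D A : (exists ps, Forall2 lt ps (pdims d 1 n) /\ contr n D A ps <> 0) -> 0 < fro_full n d D A.
Proof. intros [ps [Hps Hc]]. unfold fro_full. apply sqrt_lt_R0.
  apply Rlt_le_trans with ((contr n D A ps)^2). pose proof (pow2_ge_0 (contr n D A ps)).
  destruct (Req_dec ((contr n D A ps)^2) 0). exfalso. apply (pow_nonzero _ 2 Hc). auto.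
  lra.
  apply (msum_single _ (fun ps => (contr n D A ps)^2)); auto. intros; apply pow2_ge_0. Qed.

Lemma rnorm_nonneg n d D A j : 0 <= rnorm n d D A j.
Proof. apply spec_nonneg. Qed.
Lemma lnorm_nonneg n d D A j : 0 <= lnorm n d D A j.
Proof. apply spec_nonneg. Qed.

Lemma rsum_div m f c : rsum m (fun i => f i / c) = rsum m f / c.
Proof. unfold Rdiv. rewrite Rmult_comm, <- rsum_scal. apply rsum_ext; intros; ring. Qed.

Lemma part1 n d D A : (exists ps, Forall2 lt ps (pdims d 1 n) /\ contr n D A ps <> 0) ->
  exists C eps0, 0 < eps0 /\
     forall eps delta, 0 < eps < eps0 ->
       is_eps_perturbation n d D A delta eps ->
       rel_err n d D A delta <= eps * first_order_coeff n d D A + C * eps ^ 2.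
Proof. intros Hne. pose proof (fro_full_pos n d D A Hne) as HF.
  set (F := fro_full n d D A) in *.
  exists (rsum n (fun k => sqrt (Kc n d D A k) * fro_site n d D A (S k) * rnorm n d D A (S k)) / F), 1.
  split. lra. intros eps delta He Hp.
  assert (He' : 0 < eps <= 1) by lra.
  assert (Key : sqrt (msum (pdims d 1 n) (fun ps => (contr n D (tadd A delta) ps - contr n D A ps)^2)) <=
     eps * rsum n (fun k => lnorm n d D A (S k) * fro_site n d D A (S k) * rnorm n d D A (S k)) +
     eps^2 * rsum n (fun k => sqrt (Kc n d D A k) * fro_site n d D A (S k) * rnorm n d D A (S k))).
  { transitivity (sqrt (msum (pdims d 1 n) (fun ps => (rsum n (fun k => term n D A delta k ps))^2))).
    right. f_equal. apply msum_ext; intros. rewrite telescope. reflexivity.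
    eapply Rle_trans. apply msum_mink_sum.
    rewrite <- !rsum_scal, <- rsum_plus. apply rsum_le; intros k Hk.
    eapply Rle_trans. apply (term_bound n d D A delta eps k Hk He' Hp). right. ring. }
  unfold rel_err. fold F.
  unfold first_order_coeff. fold F.
  rewrite rsum_div.
  apply Rmult_le_reg_r with F; auto.
  replace ((eps * (rsum n (fun i => lnorm n d D A (S i) * fro_site n d D A (S i) * rnorm n d D A (S i)) / F) +
   rsum n (fun k => sqrt (Kc n d D A k) * fro_site n d D A (S k) * rnorm n d D A (S k)) / F * eps ^ 2) * F)
   with (eps * rsum n (fun k => lnorm n d D A (S k) * fro_site n d D A (S k) * rnorm n d D A (S k)) +
     eps^2 * rsum n (fun k => sqrt (Kc n d D A k) * fro_site n d D A (S k) * rnorm n d D A (S k))) by (field; lra).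
  replace (sqrt (msum (pdims d 1 n) (fun ps => (contr n D (tadd A delta) ps - contr n D A ps) ^ 2)) / F * F)
    with (sqrt (msum (pdims d 1 n) (fun ps => (contr n D (tadd A delta) ps - contr n D A ps) ^ 2))) by (field; lra).
  exact Key. Qed.

Lemma spec_rank1 ds m M F U v : 0 <= F -> msum ds (fun r => (U r)^2) = 1 -> rsum m (fun c => (v c)^2) = 1 ->
  (forall r c, Forall2 lt r ds -> (c < m)%nat -> M r c = F * U r * v c) -> spec_norm ds m M <= F.
Proof. intros HF HU Hv HM. apply spec_le; auto. intros x Hx.
  transitivity (msum ds (fun r => F^2 * (rsum m (fun c => v c * x c))^2 * (U r)^2)).
  { right. apply msum_ext; intros r Hr.
    transitivity ((F * U r * rsum m (fun c => v c * x c))^2).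
    f_equal. rewrite <- rsum_scal. apply rsum_ext; intros. rewrite HM by auto. ring. ring. }
  rewrite msum_scal, HU. pose proof (rsum_CS m v x). rewrite Hv, Hx in H.
  pose proof (pow2_ge_0 F). nra. Qed.

Lemma Bernoulli_ineq e m : 0 <= e -> 1 + INR m * e <= (1 + e)^m.
Proof. intros He. induction m. simpl; lra. rewrite S_INR. simpl.
  pose proof (pos_INR m). assert (H2 : (1+e) * (1 + INR m * e) <= (1+e) * (1+e)^m) by (apply Rmult_le_compat_l; lra). nra. Qed.

Lemma lenv_scale n D A c k ps b : lenv n D (fun j a p b => c * A j a p b) k ps b = c^k * lenv n D A k ps b.
Proof. revert b; induction k; intros b; simpl. ring. rewrite <- rsum_scal. apply rsum_ext; intros. rewrite IHk. ring. Qed.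

Section Prod.
Variables (n : nat) (d D : nat -> nat) (A : site_tensors) (u w : nat -> nat -> R).
Hypothesis Hu : forall j, (1 <= j <= n)%nat -> rsum (d j) (fun p => (u j p) ^ 2) = 1.
Hypothesis Hw : forall j, (1 <= j < n)%nat -> rsum (D j) (fun b => (w j b) ^ 2) = 1.
Hypothesis HA : forall j a p b, (1 <= j <= n)%nat -> (a < bdim n D (j - 1))%nat ->
       (p < d j)%nat -> (b < bdim n D j)%nat ->
       A j a p b = fro_site n d D A j * bvec n w (j - 1) a * u j p * bvec n w j b.

Let f := fro_site n d D A.

Fixpoint PL k := match k with O => 1 | S k' => PL k' * f (S k') end.
Fixpoint PR k := match k with O => 1 | S k' => f (n - k')%nat * PR k' end.
Fixpoint Uf k ps := match k with O => 1 | S k' => Uf k' ps * u (S k') (nth k' ps 0%nat) end.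
Fixpoint Vf k ps := match k with O => 1 | S k' => u (n - k')%nat (hd 0%nat ps) * Vf k' (tl ps) end.

Lemma f_nonneg j : 0 <= f j.
Proof. apply sqrt_pos. Qed.
Lemma PL_nonneg k : 0 <= PL k.
Proof. induction k; simpl. lra. pose proof (f_nonneg (S k)). nra. Qed.
Lemma PR_nonneg k : 0 <= PR k.
Proof. induction k; simpl. lra. pose proof (f_nonneg (n - k)). nra. Qed.

Lemma bvec_norm j : rsum (bdim n D j) (fun a => (bvec n w j a)^2) = 1.
Proof. unfold bdim, bvec. destruct (orb (j =? 0)%nat (n <=? j)%nat) eqn:E. simpl. lra.
  apply Bool.orb_false_iff in E. destruct E as [E1 E2]. apply Nat.eqb_neq in E1. apply Nat.leb_gt in E2.
  apply Hw. lia. Qed.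

Lemma Uf_app k l l' : (k <= length l)%nat -> Uf k (l ++ l') = Uf k l.
Proof. induction k; intros Hk; simpl; auto. rewrite IHk by lia. rewrite app_nth1 by lia. reflexivity. Qed.

Lemma lenv_prod k : (k <= n)%nat -> forall ps, Forall2 lt ps (pdims d 1 k) -> forall b, (b < bdim n D k)%nat ->
  lenv n D A k ps b = PL k * Uf k ps * bvec n w k b.
Proof. induction k; intros Hk ps Hps b Hb.
  - unfold bdim in Hb. simpl in Hb. assert (b = 0%nat) by lia. subst. simpl. unfold bvec. simpl. ring.
  - rewrite pdims_snoc in Hps. apply Forall2_app_inv_r in Hps. destruct Hps as [l1 [l2 [H1 [H2 ->]]]].
    inversion H2; subst. inversion H5; subst. rename x into p.
    assert (Hl1 := Forall2_length H1). rewrite pdims_length in Hl1.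
    rewrite lenv_snoc by auto.
    transitivity (rsum (bdim n D k) (fun a => (PL k * f (S k) * Uf k l1 * u (S k) p * bvec n w (S k) b) * (bvec n w k a)^2)).
    { apply rsum_ext; intros a Ha. rewrite IHk by (auto; lia). rewrite HA; try lia.
      replace (S k - 1)%nat with k by lia. fold f. ring. replace (S k - 1)%nat with k by lia. auto. }
    rewrite rsum_scal, bvec_norm. simpl. rewrite Uf_app by lia. rewrite app_nth2 by lia.
    replace (k - length l1)%nat with 0%nat by lia. simpl. ring. Qed.

Lemma renv_prod k : (k <= n)%nat -> forall ps, Forall2 lt ps (pdims d (n - k + 1) k) -> forall b, (b < bdim n D (n - k))%nat ->
  renv n D A k ps b = PR k * Vf k ps * bvec n w (n - k) b.
Proof. induction k; intros Hk ps Hps b Hb.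
  - rewrite Nat.sub_0_r in *. unfold bdim in Hb. rewrite Nat.leb_refl, Bool.orb_true_r in Hb.
    assert (b = 0%nat) by lia. subst. simpl. unfold bvec. rewrite Nat.leb_refl, Bool.orb_true_r. ring.
  - assert (Hp : pdims d (n - S k + 1) (S k) = d (n - k)%nat :: pdims d (n - k + 1) k).
    { unfold pdims. replace (n - S k + 1)%nat with (n - k)%nat by lia. simpl. rewrite Nat.add_1_r. reflexivity. }
    rewrite Hp in Hps. inversion Hps; subst. rename x into p. rename l into ps'.
    rewrite renv_S. simpl hd. simpl tl.
    transitivity (rsum (bdim n D (n - k)) (fun c => (f (n - k)%nat * PR k * u (n - k)%nat p * Vf k ps' * bvec n w (n - S k) b) * (bvec n w (n - k) c)^2)).
    { apply rsum_ext; intros c Hc. rewrite IHk by (auto; lia). rewrite HA; try lia.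
      replace (n - k - 1)%nat with (n - S k)%nat by lia. fold f. ring. replace (n - k - 1)%nat with (n - S k)%nat by lia. auto. }
    rewrite rsum_scal, bvec_norm. simpl. ring. Qed.

Lemma Uf_norm k : (k <= n)%nat -> msum (pdims d 1 k) (fun ps => (Uf k ps)^2) = 1.
Proof. induction k; intros Hk. simpl. ring.
  rewrite pdims_snoc, msum_app. rewrite <- (IHk ltac:(lia)). apply msum_ext; intros l Hl.
  apply Forall2_length in Hl. rewrite pdims_length in Hl. cbn [msum].
  transitivity (rsum (d (S k)) (fun p => (Uf k l)^2 * (u (S k) p)^2)).
  apply rsum_ext; intros p _. simpl. rewrite Uf_app by lia. rewrite app_nth2 by lia.
  replace (k - length l)%nat with 0%nat by lia. simpl. ring.
  rewrite rsum_scal, Hu by lia. ring. Qed.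

Lemma Vf_norm k : (k <= n)%nat -> msum (pdims d (n - k + 1) k) (fun ps => (Vf k ps)^2) = 1.
Proof. induction k; intros Hk. simpl. ring.
  assert (Hp : pdims d (n - S k + 1) (S k) = d (n - k)%nat :: pdims d (n - k + 1) k).
  { unfold pdims. replace (n - S k + 1)%nat with (n - k)%nat by lia. simpl. rewrite Nat.add_1_r. reflexivity. }
  rewrite Hp. cbn [msum].
  transitivity (rsum (d (n - k)%nat) (fun p => (u (n - k)%nat p)^2 * msum (pdims d (n - k + 1) k) (fun l => (Vf k l)^2))).
  apply rsum_ext; intros p _. rewrite <- msum_scal. apply msum_ext; intros. simpl. ring.
  rewrite IHk by lia. transitivity (rsum (d (n-k)%nat) (fun p => (u (n-k)%nat p)^2)). apply rsum_ext; intros; ring. apply Hu; lia. Qed.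

Lemma PL_PR m : (m <= n)%nat -> PL (n - m) * PR m = PL n.
Proof. induction m; intros Hm. rewrite Nat.sub_0_r. simpl. ring.
  simpl PR. rewrite <- IHm by lia. replace (n - m)%nat with (S (n - S m)) by lia. simpl PL.
  replace (S (n - S m)) with (n - m)%nat by lia. ring. Qed.

End Prod.

Lemma part2 n d D A : (exists ps, Forall2 lt ps (pdims d 1 n) /\ contr n D A ps <> 0) ->
  product_state n d D A ->
   exists C eps0, 0 < eps0 /\
     forall eps, 0 < eps < eps0 ->
       exists delta, is_eps_perturbation n d D A delta eps /\
         eps * first_order_coeff n d D A - C * eps ^ 2 <= rel_err n d D A delta.
Proof. intros Hne [u [w [Hu [Hw HA]]]].
  pose proof (fro_full_pos n d D A Hne) as HFp.
  assert (HF : fro_full n d D A = PL n d D A n).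
  { unfold fro_full. transitivity (sqrt ((PL n d D A n)^2)).
    f_equal. transitivity (msum (pdims d 1 n) (fun ps => (PL n d D A n)^2 * (Uf u n ps)^2)).
    apply msum_ext; intros ps Hps. unfold contr. rewrite (lenv_prod n d D A u w Hw HA n (le_n n) ps Hps 0%nat).
    unfold bvec. rewrite Nat.leb_refl, Bool.orb_true_r. ring.
    unfold bdim. rewrite Nat.leb_refl, Bool.orb_true_r. lia.
    rewrite msum_scal, (Uf_norm n d u Hu n (le_n n)). ring.
    apply sqrt_pow2. apply PL_nonneg. }
  set (F := fro_full n d D A) in *.
  assert (Hc : first_order_coeff n d D A <= INR n).
  { unfold first_order_coeff. rewrite <- (Rmult_1_r (INR n)), <- rsum_const.
    apply rsum_le; intros k Hk. fold F.
    assert (Hl : lnorm n d D A (S k) <= PL n d D A k).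
    { rewrite lnorm_S. apply (spec_rank1 _ _ _ _ (Uf u k) (bvec n w k)). apply PL_nonneg.
      apply (Uf_norm n d u Hu); lia. apply (bvec_norm n D w Hw).
      intros r c Hr Hc. apply (lenv_prod n d D A u w Hw HA); auto; lia. }
    assert (Hr : rnorm n d D A (S k) <= PR n d D A (n - S k)).
    { unfold rnorm. apply (spec_rank1 _ _ _ _ (Vf n u (n - S k)) (bvec n w (S k))). apply PR_nonneg.
      replace (S k + 1)%nat with (n - (n - S k) + 1)%nat by lia. apply (Vf_norm n d u Hu); lia. apply (bvec_norm n D w Hw).
      intros r c Hr Hc. replace (S k + 1)%nat with (n - (n - S k) + 1)%nat in Hr by lia.
      replace (bvec n w (S k)) with (bvec n w (n - (n - S k))) by (f_equal; lia).
      apply (renv_prod n d D A u w Hw HA); auto; try lia. replace (n - (n - S k))%nat with (S k) by lia. auto. }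
    assert (HP : PL n d D A k * fro_site n d D A (S k) * PR n d D A (n - S k) = F).
    { rewrite HF. rewrite <- (PL_PR n d D A (n - S k)) by lia. replace (n - (n - S k))%nat with (S k) by lia.
      simpl PL. ring. }
    pose proof (lnorm_nonneg n d D A (S k)). pose proof (rnorm_nonneg n d D A (S k)).
    pose proof (sqrt_pos (ssite n d D A k)). rewrite fro_site_S in *.
    apply Rmult_le_reg_r with F; auto. unfold Rdiv. rewrite Rmult_assoc, Rinv_l by lra. rewrite Rmult_1_r, Rmult_1_l.
    rewrite <- HP. apply Rmult_le_compat; auto. apply Rmult_le_pos; auto. apply Rmult_le_compat; auto. lra. }
  exists 0, 1. split. lra. intros eps He.
  exists (fun j a p b => eps * A j a p b). split.
  - intros j Hj. right. unfold fro_site.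
    transitivity (sqrt (eps^2 * rsum (bdim n D (j - 1)) (fun a => rsum (d j) (fun p => rsum (bdim n D j) (fun b => (A j a p b)^2))))).
    f_equal. rewrite <- rsum_scal. apply rsum_ext; intros. rewrite <- rsum_scal. apply rsum_ext; intros.
    rewrite <- rsum_scal. apply rsum_ext; intros. ring.
    rewrite sqrt_mult by (try apply pow2_ge_0; repeat (apply rsum_nonneg; intros); apply pow2_ge_0).
    rewrite sqrt_pow2 by lra. reflexivity.
  - assert (Hct : forall ps, contr n D (tadd A (fun j a p b => eps * A j a p b)) ps = (1 + eps)^n * contr n D A ps).
    { intros ps. unfold contr. rewrite <- lenv_scale. apply lenv_ext. intros. unfold tadd. ring. }
    assert (Hre : rel_err n d D A (fun j a p b => eps * A j a p b) = (1 + eps)^n - 1).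
    { unfold rel_err. fold F.
      transitivity (sqrt (((1+eps)^n - 1)^2 * msum (pdims d 1 n) (fun ps => (contr n D A ps)^2)) / F).
      f_equal. f_equal. rewrite <- msum_scal. apply msum_ext; intros. rewrite Hct. ring.
      rewrite sqrt_mult by (try apply pow2_ge_0; apply msum_nonneg; intros; apply pow2_ge_0).
      pose proof (Bernoulli_ineq eps n ltac:(lra)). pose proof (pos_INR n).
      rewrite sqrt_pow2 by nra. fold (fro_full n d D A). fold F. field. lra. }
    rewrite Hre. pose proof (Bernoulli_ineq eps n ltac:(lra)).
    assert (eps * first_order_coeff n d D A <= eps * INR n) by (apply Rmult_le_compat_l; lra). lra. Qed.

Theorem mainTheorem11 (n : nat) (d D : nat -> nat) (A : site_tensors) :
  (1 <= n)%nat ->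
  (exists ps, Forall2 lt ps (pdims d 1 n) /\ contr n D A ps <> 0) ->
  (exists C eps0, 0 < eps0 /\
     forall eps delta, 0 < eps < eps0 ->
       is_eps_perturbation n d D A delta eps ->
       rel_err n d D A delta <= eps * first_order_coeff n d D A + C * eps ^ 2) /\
  (product_state n d D A ->
   exists C eps0, 0 < eps0 /\
     forall eps, 0 < eps < eps0 ->
       exists delta, is_eps_perturbation n d D A delta eps /\
         eps * first_order_coeff n d D A - C * eps ^ 2 <= rel_err n d D A delta).
Proof.
  intros Hn Hne. split.
  - apply part1; auto.
  - intros Hps. apply part2; auto.
Qed.
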